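(* Let $L_{kal}$ be the steady-state Kalman filter gain. Then, for every selection matrix $D_a$ and every symmetric positive semidefinite $W$, $L_{kal}$ is an optimal solution of $$\max_{L\in\mathbb{R}^{n_x\times n_y},\ \lambda\in\mathbb{R}_+}\ \lambda\quad\text{s.t.}\quad \tfrac12 D_a^\top\Sigma_{r_\omega}^{-1}(L)D_a-\lambda D_a^\top W D_a\succeq0,\quad \rho(A-LC)<1,$$ i.e., $J_0(L_{kal})\ge J_0(L)$ for every $L$ with $\rho(A-LC)<1$.
   Context: Consider the discrete-time system $x(k+1)=Ax(k)+Bu(k)+B_\omega\omega(k)$, $y(k)=Cx(k)+D_\omega\omega(k)+y_a(k)$, with $x\in\mathbb{R}^{n_x}$, $y\in\mathbb{R}^{n_y}$, $\omega(k)\sim\mathcal N(0,I_{n_\omega})$ i.i.d., $(A,C)$ detectable, $(A,B_\omega)$ stabilizable, and an observer $\hat x(k+1)=A\hat x(k)+Bu(k)+L(y(k)-C\hat x(k))$ with residual $r(k)=y(k)-C\hat x(k)$. The attack is $y_a(k)=D_a\bar a$ for $k\ge0$ (zero before), where $D_a\in\mathbb{R}^{n_y\times n_a}$ has entries $(j_i,i)=1$ for the compromised sensor indices $j_1<\dots<j_{n_a}$ and zeros elsewhere; $W\in\mathbb{R}^{n_y\times n_y}$ is symmetric positive semidefinite. For $L$ with $\rho(A-LC)<1$ ($\rho$ = spectral radius), $\Sigma_{\tilde x}(L)$ solves $\Sigma=(A-LC)\Sigma(A-LC)^\top+(B_\omega-LD_\omega)(B_\omega-LD_\omega)^\top$ and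 $\Sigma_{r_\omega}(L)=C\Sigma_{\tilde x}(L)C^\top+D_\omega D_\omega^\top$ (assumed invertible). The steady-state Kalman filter gain $L_{kal}$ (predictor form matching the observer above) is stabilizing and minimizes the residual covariance: $\Sigma_{r_\omega}(L_{kal})\preceq\Sigma_{r_\omega}(L)$ for all $L$ with $\rho(A-LC)<1$. Define $J_0(L)=\min_{\bar a\in\mathbb{R}^{n_a}}\frac12\bar a^\top D_a^\top\Sigma_{r_\omega}^{-1}(L)D_a\bar a$ subject to $\bar a^\top D_a^\top WD_a\bar a\ge1$. $\mathbb{R}_+$ denotes the positive reals. *)

(* Defs.v *)
From HB Require Import structures.
From mathcomp Require Import all_boot all_order all_algebra.
From mathcomp Require Import complex.
From mathcomp Require Import all_classical all_reals ereal.
Set Implicit Arguments. Unset Strict Implicit. Unset Printing Implicit Defensive.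
Import Order.TTheory GRing.Theory Num.Theory.
Local Open Scope ring_scope.
Local Open Scope classical_set_scope.

Section Defs.
Variable R : realType.

Definition cmx n (M : 'M[R]_n) : 'M[R[i]]_n := map_mx (fun x => (x%:C)%C) M.

(* spectral radius < 1 : every (complex) eigenvalue has modulus < 1 *)
Definition schur_stable n (M : 'M[R]_n) : Prop :=
  forall z : R[i], eigenvalue (cmx M) z -> `|z| < 1.

Definition symmetric n (M : 'M[R]_n) : Prop := M^T = M.
Definition psd n (M : 'M[R]_n) : Prop :=
  symmetric M /\ forall v : 'cV[R]_n, 0 <= (v^T *m M *m v) 0 0.
Definition loewner_le n (M N : 'M[R]_n) : Prop := psd (N - M).

(* Sigma solves the Lyapunov equation defining Sigma_x~(L) *)
Definition lyap_sol nx ny nw (A : 'M[R]_nx) (Bw : 'M[R]_(nx, nw))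
  (C : 'M[R]_(ny, nx)) (Dw : 'M[R]_(ny, nw)) (L : 'M[R]_(nx, ny))
  (S : 'M[R]_nx) : Prop :=
  S = (A - L *m C) *m S *m (A - L *m C)^T
      + (Bw - L *m Dw) *m (Bw - L *m Dw)^T.

Definition Sigma_r nx ny nw (C : 'M[R]_(ny, nx)) (Dw : 'M[R]_(ny, nw))
  (S : 'M[R]_nx) : 'M[R]_ny := C *m S *m C^T + Dw *m Dw^T.

Definition sel_mx ny na (j : 'I_na -> 'I_ny) : 'M[R]_(ny, na) :=
  \matrix_(r < ny, i < na) (r == j i)%:R.

Definition strictly_increasing ny na (j : 'I_na -> 'I_ny) : Prop :=
  forall i i' : 'I_na, (i < i')%N -> (j i < j i')%N.

Definition qf n (M : 'M[R]_n) (a : 'cV[R]_n) : R := (a^T *m M *m a) 0 0.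

(* J0 = min over abar with abar^T Da^T W Da abar >= 1 of 1/2 abar^T Da^T Sr^-1 Da abar,
   written as an infimum in the extended reals (+oo when infeasible) *)
Definition J0 ny na (Da : 'M[R]_(ny, na)) (W Sr : 'M[R]_ny) : \bar R :=
  ereal_inf [set ((2^-1 * qf (Da^T *m invmx Sr *m Da) a)%:E)
            | a in [set a : 'cV[R]_na | 1 <= qf (Da^T *m W *m Da) a]].

(* feasibility of (L, lambda) in the max problem, given Sigma_r(L) = Sr *)
Definition lam_feasible ny na (Da : 'M[R]_(ny, na)) (W Sr : 'M[R]_ny) (lam : R) : Prop :=
  0 < lam /\ psd (2^-1 *: (Da^T *m invmx Sr *m Da) - lam *: (Da^T *m W *m Da)).

End Defs.
Arguments sel_mx {R ny na} j.

(* Main.v *)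
From HB Require Import structures.
From mathcomp Require Import all_boot all_order all_algebra.
From mathcomp Require Import complex.
From mathcomp Require Import all_classical all_reals ereal.
From mathcomp Require Import ring lra.
Require Import Defs.
Import Order.TTheory GRing.Theory Num.Theory.
Set Implicit Arguments. Unset Strict Implicit. Unset Printing Implicit Defensive.
Local Open Scope complex_scope.
Local Open Scope ring_scope.

Section Seq.
Variable F : numFieldType.

Definition dlt (l : F) (a : nat -> F) := fun k => a k.+1 - l * a k.

Lemma geo_step (l r c : F) (a : nat -> F) : `|l| < r ->
  (forall k, `|dlt l a k| <= c * r ^+ k) ->
  forall k, `|a k| <= (`|a 0%N| + c / (r - `|l|)) * r ^+ k.
Proof.
move=> lr H.
have r0 : 0 < r by apply: le_lt_trans lr.
have dr : 0 < r - `|l| by rewrite subr_gt0.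
have c0 : 0 <= c by have := H 0%N; rewrite expr0 mulr1; apply: le_trans.
set c' := _ + _.
have c'0 : 0 <= c' by rewrite addr_ge0 // divr_ge0 // ltW.
have key : `|l| * c' + c <= c' * r.
  have -> : c' * r = `|l| * c' + (c' * (r - `|l|)).
    by ring.
  rewrite lerD2l /c' mulrDl -mulrA mulVf ?gt_eqF // mulr1 lerDr.
  by rewrite mulr_ge0 // ltW.
elim=> [|k IH]; first by rewrite expr0 mulr1 lerDl divr_ge0 // ltW.
have -> : a k.+1 = l * a k + dlt l a k by rewrite /dlt; ring.
apply: (le_trans (ler_normD _ _)).
apply: (le_trans (lerD (y := `|l| * (c' * r ^+ k)) _ (H k))).
  rewrite normrM; apply: ler_wpM2l => //.
have -> : c' * r ^+ k.+1 = (c' * r) * r ^+ k by rewrite exprS; ring.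
apply: (le_trans _ (ler_wpM2r (exprn_ge0 k (ltW r0)) key)).
by rewrite le_eqVlt; apply/orP; left; apply/eqP; ring.
Qed.

Fixpoint dlts (s : seq F) (a : nat -> F) : nat -> F :=
  match s with [::] => a | l :: s' => dlts s' (dlt l a) end.

Lemma dlts_bound (r : F) (s : seq F) : (forall l, l \in s -> `|l| < r) ->
  forall a, (forall k, dlts s a k = 0) -> exists c, forall k, `|a k| <= c * r ^+ k.
Proof.
elim: s => [|l s IH] Hs a Ha /=.
  by exists 0 => k; rewrite mul0r (Ha k : a k = 0) normr0.
have [c Hc] := IH (fun l' hl' => Hs l' (ltac:(by rewrite inE hl' orbT))) (dlt l a) Ha.
exists (`|a 0%N| + c / (r - `|l|)); apply: geo_step => //.
by apply: Hs; rewrite mem_head.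
Qed.
End Seq.
Section Mx.
Variable F : numClosedFieldType.

Definition aseq n (M : 'M[F]_n) (u : 'rV_n) (a : 'I_n) : nat -> F :=
  fun k => (u *m M ^+ k) 0 a.

Lemma dlt_aseq n (M : 'M[F]_n) u a l :
  dlt l (aseq M u a) = aseq M (u *m (M - l%:M)) a.
Proof.
apply: funext => k; rewrite /dlt /aseq exprS -mulmxE mulmxA mulmxBr mulmxBl.
by rewrite mul_mx_scalar -scalemxAl !mxE.
Qed.

Lemma dlts_aseq n (M : 'M[F]_n) a s : forall u,
  dlts s (aseq M u a) = aseq M (u *m \prod_(l <- s) (M - l%:M)) a.
Proof.
elim: s => [|l s IH] u /=; first by rewrite big_nil mulmx1.
by rewrite dlt_aseq IH big_cons -mulmxE mulmxA.
Qed.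

Lemma mx_decay n (M : 'M[F]_n.+1) (r : F) :
  (forall z, eigenvalue M z -> `|z| < r) ->
  forall u a, exists c, forall k, `|aseq M u a k| <= c * r ^+ k.
Proof.
move=> Hr u a.
have [s Hs] := closed_field_poly_normal (char_poly M).
rewrite (monicP (char_poly_monic M)) scale1r in Hs.
apply: (dlts_bound (s := s)).
  by move=> l ls; apply: Hr; rewrite eigenvalue_root_char Hs root_prod_XsubC.
move=> k; rewrite dlts_aseq.
have -> : \prod_(l <- s) (M - l%:M) = 0.
  rewrite -(Cayley_Hamilton M) Hs rmorph_prod; apply: eq_bigr => l _.
  by rewrite rmorphB /= horner_mx_X horner_mx_C.
by rewrite /aseq mulmx0 mul0mx mxE.
Qed.
End Mx.
Section Real.
Variable R : realType.

Lemma normC_real (x : R) : `|x%:C| = `|x|%:C.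
Proof. by rewrite normc_def /= expr0n /= addr0 sqrtr_sqr. Qed.

Lemma C_ge0_real (c : R[i]) : 0 <= c -> c = (complex.Re c)%:C.
Proof. by move=> /ger0_Im Hc; rewrite {1}[c]complexE Hc mulr0 addr0. Qed.

Lemma cmxX n (M : 'M[R]_n) k : cmx M ^+ k = cmx (M ^+ k).
Proof.
rewrite /cmx (_ : (fun x => x%:C) = real_complex R) //.
elim: k => [|k IH]; first by rewrite !expr0 map_mx1.
by rewrite !exprS IH -!mulmxE map_mxM.
Qed.

Lemma choose_r (s : seq R[i]) : (forall l, l \in s -> `|l| < 1) ->
  exists r : R, 0 <= r < 1 /\ forall l, l \in s -> `|l| < r%:C.
Proof.
elim: s => [|l s IH] Hs; first by exists 0; split => //; rewrite lexx ltr01.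
have Hs' : forall l', l' \in s -> `|l'| < 1.
  by move=> l' hl'; apply: Hs; rewrite inE hl' orbT.
have [r [r01 Hr]] := IH Hs'.
have /andP [r0 r1] := r01.
have Hl := Hs l (mem_head _ _).
have := C_ge0_real (normr_ge0 l); set x := complex.Re _ => Ex.
have x0 : 0 <= x by rewrite -ler0c -Ex.
have x1 : x < 1 by rewrite -ltcR -Ex.
exists (Num.max r ((x + 1) / 2)); split.
  by rewrite le_max r0 /= gt_max r1 /=; lra.
move=> l'; rewrite inE => /orP [/eqP -> | hl'].
  rewrite Ex ltcR lt_max; apply/orP; right; lra.
apply: (lt_le_trans (Hr l' hl')); rewrite lecR le_max lexx //.
Qed.

Lemma real_decay n (M : 'M[R]_n) : schur_stable M ->
  exists r : R, 0 <= r < 1 /\ forall (u : 'rV_n) a, exists c : R,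
      forall k, `|(u *m M ^+ k) 0 a| <= c * r ^+ k.
Proof.
case: n M => [|n] M HM.
  by exists 0; split; [rewrite lexx ltr01 | move=> u []].
have [s Hs] := closed_field_poly_normal (char_poly (cmx M)).
rewrite (monicP (char_poly_monic _)) scale1r in Hs.
have [r [r01 Hr]] : exists r : R, 0 <= r < 1 /\ forall l, l \in s -> `|l| < r%:C.
  apply: choose_r => l ls; apply: HM.
  by rewrite eigenvalue_root_char Hs root_prod_XsubC.
exists r; split => // u a.
have Hr' : forall z, eigenvalue (cmx M) z -> `|z| < r%:C.
  by move=> z; rewrite eigenvalue_root_char Hs root_prod_XsubC; apply: Hr.
have [c Hc] := mx_decay Hr' (map_mx (real_complex R) u) a.
have c0 : 0 <= c by have := Hc 0%N; rewrite expr0 mulr1; apply: le_trans.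
exists (complex.Re c) => k; have := Hc k.
rewrite /aseq cmxX /cmx (_ : (fun x => x%:C) = real_complex R) //.
rewrite -map_mxM mxE normC_real {1}(C_ge0_real c0) -rmorphXn -rmorphM /=.
by rewrite lecR.
Qed.
End Real.
Section Lyap.
Variable R : realType.

Definition bil n (Z : 'M[R]_n) (p q : 'rV[R]_n) : R := (p *m Z *m q^T) 0 0.

Lemma bil_sym n (Z : 'M[R]_n) p q : Z^T = Z -> bil Z p q = bil Z q p.
Proof.
move=> HZ; rewrite /bil.
have -> : (p *m Z *m q^T) 0 0 = ((p *m Z *m q^T)^T) 0 0 by rewrite [RHS]mxE.
by rewrite !trmx_mul trmxK HZ mulmxA.
Qed.

Lemma bilD n (X Y : 'M[R]_n) p q : bil (X + Y) p q = bil X p q + bil Y p q.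
Proof. by rewrite /bil mulmxDr mulmxDl mxE. Qed.

Lemma bilN n (X : 'M[R]_n) p q : bil (- X) p q = - bil X p q.
Proof. by rewrite /bil mulmxN mulNmx mxE. Qed.

Lemma bilZ n (X : 'M[R]_n) a p q : bil (a *: X) p q = a * bil X p q.
Proof. by rewrite /bil -scalemxAr -scalemxAl mxE. Qed.

Lemma bil_conj m n (N : 'M[R]_(m, n)) (X : 'M[R]_n) p q :
  bil (N *m X *m N^T) p q = bil X (p *m N) (q *m N).
Proof. by rewrite /bil trmx_mul !mulmxA. Qed.

Lemma bil_gram m n (B : 'M[R]_(n, m)) p : 0 <= bil (B *m B^T) p p.
Proof.
rewrite /bil mulmxA -mulmxA -trmx_mul mxE; apply: sumr_ge0 => i _.
by rewrite !mxE -expr2 sqr_ge0.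
Qed.

Lemma bil_entry n (Y : 'M[R]_n) i j : Y i j = bil Y 'e_i 'e_j.
Proof. by rewrite /bil -rowE trmx_delta -colE !mxE. Qed.

Lemma bil_expand n (Z : 'M[R]_n) p q :
  bil Z p q = \sum_b \sum_a p 0 a * Z a b * q 0 b.
Proof.
rewrite /bil mxE; apply: eq_bigr => b _; rewrite mxE big_distrl /=.
by apply: eq_bigr => a _; rewrite !mxE.
Qed.

Lemma bernoulli (t : R) k : 1 <= t -> 1 + k%:R * (t - 1) <= t ^+ k.
Proof.
move=> t1; elim: k => [|k IH]; first by rewrite mul0r addr0 expr0.
rewrite exprS; have t0 : 0 <= t - 1 by rewrite subr_ge0.
have h : 0 <= k%:R * (t - 1) by rewrite mulr_ge0.
apply: (le_trans _ (ler_wpM2l (le_trans ler01 t1) IH)).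
rewrite -natr1; nra.
Qed.

Lemma geo_small (q K eps : R) : 0 <= q < 1 -> 0 < eps ->
  exists k, K * q ^+ k < eps.
Proof.
move=> /andP [q0 q1] e0.
have [K0|K0] := lerP K 0.
  by exists 0%N; rewrite expr0 mulr1; apply: le_lt_trans K0 e0.
have [->|qn0] := eqVneq q 0.
  by exists 1%N; rewrite expr1 mulr0.
have qp : 0 < q by rewrite lt_def qn0 q0.
set t := q^-1.
have t1 : 1 < t by rewrite /t invf_gt1.
have h0 : 0 < t - 1 by rewrite subr_gt0.
have x0 : 0 <= K / (eps * (t - 1)) by rewrite divr_ge0 // ?mulr_ge0 // ltW.
set k := Num.Def.archi_bound (K / (eps * (t - 1))).
have Hk := archi_boundP x0; rewrite -/k in Hk.
exists k.
have B := bernoulli k (ltW t1).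
have tk : 0 < t ^+ k by rewrite exprn_gt0 // (lt_trans ltr01).
have -> : q ^+ k = (t ^+ k)^-1 by rewrite /t exprVn invrK.
rewrite -(ltr_pM2r tk) -mulrA mulVf ?gt_eqF // mulr1.
have ep : 0 < eps * (t - 1) by rewrite mulr_gt0.
have : K / (eps * (t - 1)) * (eps * (t - 1)) < k%:R * (eps * (t - 1)).
  by rewrite ltr_pM2r.
rewrite divfK ?gt_eqF // => HK.
nra.
Qed.
End Lyap.
Section Lyap2.
Variable R : realType.

Lemma bil_decay n (M : 'M[R]_n) : schur_stable M ->
  forall (Z : 'M_n) p q (eps : R), 0 < eps ->
  exists k, `|bil Z (p *m M ^+ k) (q *m M ^+ k)| < eps.
Proof.
move=> HM Z p q eps e0.
have [r [r01 Hr]] := real_decay HM.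
have [cp Hcp] := choice (Hr p).
have [cq Hcq] := choice (Hr q).
have /andP [r0 r1] := r01.
have r201 : 0 <= r ^+ 2 < 1.
  by rewrite exprn_ge0 //= expr2 (le_lt_trans (ler_wpM2l r0 (ltW r1))) // mulr1.
have [k Hk] := geo_small (\sum_b \sum_a cp a * `|Z a b| * cq b) r201 e0.
exists k; apply: le_lt_trans Hk.
rewrite bil_expand -exprM mulnC exprM mulr_suml.
apply: (le_trans (ler_norm_sum _ _ _)); apply: ler_sum => b _.
rewrite mulr_suml.
apply: (le_trans (ler_norm_sum _ _ _)); apply: ler_sum => a _.
have -> : cp a * `|Z a b| * cq b * (r ^+ k) ^+ 2 =
   (cp a * r ^+ k) * `|Z a b| * (cq b * r ^+ k) by rewrite expr2; ring.
rewrite !normrM; apply: ler_pM => //.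
  by apply: ler_wpM2r => //; apply: Hcp.
Qed.

Lemma bil_iter n (M Y : 'M[R]_n) : Y = M *m Y *m M^T ->
  forall k p q, bil Y p q = bil Y (p *m M ^+ k) (q *m M ^+ k).
Proof.
move=> HY; elim=> [|k IH] p q; first by rewrite expr0 !mulmx1.
by rewrite IH {1}HY bil_conj exprSr -!mulmxE !mulmxA.
Qed.

Lemma small_eq0 (x : R) : (forall eps, 0 < eps -> `|x| < eps) -> x = 0.
Proof.
move=> H; have [//|x0] := eqVneq x 0.
have h : 0 < `|x| by rewrite normr_gt0.
by have := H _ h; rewrite ltxx.
Qed.

Lemma lyap_sym n m (M S : 'M[R]_n) (B : 'M[R]_(n, m)) : schur_stable M ->
  S = M *m S *m M^T + B *m B^T -> S^T = S.
Proof.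
move=> HM HS; set Y := S - S^T.
have HY : Y = M *m Y *m M^T.
  have HT : S^T = M *m S^T *m M^T + B *m B^T.
    by rewrite {1}HS linearD /= !trmx_mul !trmxK mulmxA.
  rewrite /Y {1}HS {1}HT.
  by rewrite mulmxBr mulmxBl opprD addrACA subrr addr0.
have Y0 : Y = 0.
  apply/matrixP => i j; rewrite [RHS]mxE; apply: small_eq0 => e e0.
  have [k Hk] := bil_decay HM Y 'e_i 'e_j e0.
  by rewrite bil_entry (bil_iter HY k).
by apply/esym/eqP; rewrite -subr_eq0 -/Y Y0.
Qed.

Lemma lyap_psd n m (M S : 'M[R]_n) (B : 'M[R]_(n, m)) : schur_stable M ->
  S = M *m S *m M^T + B *m B^T -> forall p, 0 <= bil S p p.
Proof.
move=> HM HS p.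
have Hk : forall k, bil S (p *m M ^+ k) (p *m M ^+ k) <= bil S p p.
  elim=> [|k IH]; first by rewrite expr0 mulmx1.
  apply: le_trans IH; rewrite [in X in _ <= X]HS bilD bil_conj.
  rewrite exprSr -mulmxE !mulmxA lerDl; exact: bil_gram.
rewrite leNgt; apply/negP => x0.
have nx0 : 0 < - bil S p p by rewrite oppr_gt0.
have [k Hk'] := bil_decay HM S p p nx0.
have := Hk k; move: Hk'; set y := bil S _ _ => h1 h2.
have : - y <= `|y| by rewrite -normrN ler_norm.
lra.
Qed.
End Lyap2.
Section Inv.
Variable R : realType.

Lemma bilBl n (Z : 'M[R]_n) p p' q : bil Z (p - p') q = bil Z p q - bil Z p' q.
Proof. by rewrite /bil !mulmxBl !mxE. Qed.

Lemma bilBr n (Z : 'M[R]_n) p q q' : bil Z p (q - q') = bil Z p q - bil Z p q'.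
Proof. by rewrite /bil linearB /= mulmxBr !mxE. Qed.

Lemma mulmxKV' m n k (X : 'M[R]_n) (u : 'M_(m, n)) (v : 'M_(n, k)) :
  X \in unitmx -> u *m X *m (invmx X *m v) = u *m v.
Proof. by move=> HX; rewrite mulmxA -(mulmxA u) mulmxV // mulmx1. Qed.

Lemma inv_mono n (A B : 'M[R]_n) : A^T = A -> B^T = B ->
  A \in unitmx -> B \in unitmx -> (forall p, 0 <= bil A p p) ->
  (forall p, 0 <= bil (B - A) p p) ->
  forall p, bil (invmx B) p p <= bil (invmx A) p p.
Proof.
move=> HA HB uA uB pA pBA p.
have HAi : (invmx A)^T = invmx A by rewrite trmx_inv HA.
have HBi : (invmx B)^T = invmx B by rewrite trmx_inv HB.
set y := p *m invmx B; set z := p *m invmx A.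
have h1 := pA (y - z).
rewrite bilBl !bilBr (bil_sym z y HA) in h1.
have e1 : bil A y z = bil (invmx B) p p.
  by rewrite /bil /y /z trmx_mul HAi mulmxKV'.
have e2 : bil A z z = bil (invmx A) p p.
  by rewrite /bil /z trmx_mul HAi mulmxKV'.
have e3 : bil B y y = bil (invmx B) p p.
  by rewrite /bil /y trmx_mul HBi mulmxKV'.
have h2 := pBA y; rewrite bilD bilN in h2.
lra.
Qed.
End Inv.
Section Main.
Variable R : realType.

Lemma qcE n (X : 'M[R]_n) (v : 'cV_n) : (v^T *m X *m v) 0 0 = bil X v^T v^T.
Proof. by rewrite /bil trmxK. Qed.

Lemma bil_conjT m n (N : 'M[R]_(m, n)) (X : 'M[R]_m) p q :
  bil (N^T *m X *m N) p q = bil X (p *m N^T) (q *m N^T).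
Proof. by rewrite /bil trmx_mul trmxK !mulmxA. Qed.

Lemma sigma_props nx ny nw (C : 'M[R]_(ny, nx)) (Dw : 'M[R]_(ny, nw))
  (M S : 'M[R]_nx) (B : 'M[R]_(nx, nw)) : schur_stable M ->
  S = M *m S *m M^T + B *m B^T ->
  (Sigma_r C Dw S)^T = Sigma_r C Dw S /\ forall p, 0 <= bil (Sigma_r C Dw S) p p.
Proof.
move=> HM HS; split.
  by rewrite /Sigma_r linearD /= !trmx_mul !trmxK (lyap_sym HM HS) mulmxA.
move=> p; rewrite /Sigma_r bilD bil_conj addr_ge0 ?bil_gram //.
exact: lyap_psd HM HS _.
Qed.
End Main.

Unset Implicit Arguments.

Theorem proposition1 (R : realType) (nx ny nw na : nat)
  (A : 'M[R]_nx) (Bw : 'M[R]_(nx, nw)) (C : 'M[R]_(ny, nx)) (Dw : 'M[R]_(ny, nw))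
  (* (A, C) detectable, (A, Bw) stabilizable *)
  (Hdet : exists L : 'M[R]_(nx, ny), schur_stable (A - L *m C))
  (Hstab : exists K : 'M[R]_(nw, nx), schur_stable (A - Bw *m K))
  (* residual covariance invertible for every stabilizing gain *)
  (Hinv : forall (L : 'M[R]_(nx, ny)) (S : 'M[R]_nx),
      schur_stable (A - L *m C) -> lyap_sol A Bw C Dw L S ->
      Sigma_r C Dw S \in unitmx)
  (* the steady-state Kalman gain Lkal, with Sigma_x~(Lkal) = Skal *)
  (Lkal : 'M[R]_(nx, ny)) (Skal : 'M[R]_nx)
  (Hkal_stable : schur_stable (A - Lkal *m C))
  (Hkal_sol : lyap_sol A Bw C Dw Lkal Skal)
  (Hkal_min : forall (L : 'M[R]_(nx, ny)) (S : 'M[R]_nx),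
      schur_stable (A - L *m C) -> lyap_sol A Bw C Dw L S ->
      loewner_le (Sigma_r C Dw Skal) (Sigma_r C Dw S))
  (* attack selection matrix and weight *)
  (j : 'I_na -> 'I_ny) (Hj : strictly_increasing j)
  (W : 'M[R]_ny) (HW : psd W) :
  forall (L : 'M[R]_(nx, ny)) (S : 'M[R]_nx),
    schur_stable (A - L *m C) -> lyap_sol A Bw C Dw L S ->
    (* Lkal is optimal for the max problem: every lambda feasible for L is feasible for Lkal *)
    (forall lam : R, lam_feasible (sel_mx j) W (Sigma_r C Dw S) lam ->
                     lam_feasible (sel_mx j) W (Sigma_r C Dw Skal) lam)
    /\
    (* J0(Lkal) >= J0(L) *)
    (J0 (sel_mx j) W (Sigma_r C Dw S) <= J0 (sel_mx j) W (Sigma_r C Dw Skal))%E.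
Proof.
move=> L S HL HS.
set D := sel_mx j.
have [Hks Hkq] := sigma_props C Dw Hkal_stable Hkal_sol.
have [Hss Hsq] := sigma_props C Dw HL HS.
have uk := Hinv _ _ Hkal_stable Hkal_sol.
have us := Hinv _ _ HL HS.
have Hle : forall p, 0 <= bil (Sigma_r C Dw S - Sigma_r C Dw Skal) p p.
  move=> p; have [_ H] := Hkal_min _ _ HL HS.
  by have := H p^T; rewrite qcE trmxK.
have key := inv_mono Hks Hss uk us Hkq Hle.
have keyD : forall v : 'cV_na,
    qf (D^T *m invmx (Sigma_r C Dw S) *m D) v <=
    qf (D^T *m invmx (Sigma_r C Dw Skal) *m D) v.
  by move=> v; rewrite /qf !qcE !bil_conjT; apply: key.
split.
  move=> lam [lam0 [Hsym Hq]]; split => //; split.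
    rewrite /symmetric linearB /= !linearZ /= !trmx_mul !trmxK trmx_inv Hks.
    by rewrite (proj1 HW) !mulmxA.
  move=> v; have := Hq v; have := keyD v; rewrite /qf !qcE !bilD !bilN !bilZ.
  set a1 := bil _ _ _; set a2 := bil _ _ _; set a3 := bil _ _ _.
  move=> h1 h2.
  have : 0 <= 2^-1 * (a2 - a1) by rewrite mulr_ge0 // ?invr_ge0 ?ler0n // subr_ge0.
  lra.
rewrite /J0; apply/ereal_infP => y [a Ha <-].
apply: (le_trans (ereal_inf_lbound _)); first by exists a.
by rewrite lee_fin ler_wpM2l // invr_ge0 ler0n.
Qed.
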